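(* Let $\mathcal{X},\mathcal{Y}$ be finite, $p(X,Y)\in\Delta_{\mathcal{X}\times\mathcal{Y}}$ of full support, $\mathcal{T}=\mathbb{N}$, $\mathcal{E}_{\mathrm{ce}}:=\{r(X)\,\mathcal{U}(\mathcal{Y}) : r\in\Delta_{\mathcal{X}}\}$, and let $\mathrm{DIB}_{\mathrm{ce}}(\lambda)$ denote the DIB problem on $\mathcal{A}=\mathcal{X}\times\mathcal{Y}$ with exponential family $\mathcal{E}_{\mathrm{ce}}$ and unconstrained encoders $C=C(\mathcal{X}\times\mathcal{Y},\mathcal{T})$. Let $\Lambda:=D(p\|\mathcal{E}_{\mathrm{ce}})$. Then for all $(\sigma,\tau)\in\mathrm{Bij}(\mathcal{X})\times\mathrm{Bij}(\mathcal{Y})$: (i) if $\kappa\in\mathrm{DIB}_{\mathrm{ce}}(\Lambda)$, then $(\sigma,\tau)\in G_{\mathrm{ce}}$ if and only if $\kappa\circ(\sigma\otimes\tau)=\kappa$; (ii) if $(\sigma,\tau)\in G_{\mathrm{ce}}$, then $\kappa\circ(\sigma\otimes\tau)=\kappa$ for every $0\le\lambda\le\Lambda$ and every $\kappa\in\mathrm{DIB}_{\mathrm{ce}}(\lambda)$; (iii) the projection $\pi$ associated with the equivalence relation $(x,y)\sim(x',y')\iff p(y|x)=p(y'|x')$ does not coincide with the projection on $G_{\mathrm{ce}}$-orbits in general: there exist finite $\mathcal{X},\mathcal{Y}$ and a full-support $p(X,Y)$ for which $\pi\neq\pi_{\mathrm{ce}}$ (e.g. $|\mathcal{X}|=3$,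 $|\mathcal{Y}|=2$).
   Context: $\mathcal{U}(\mathcal{Y})$ is the uniform distribution; $(\sigma\otimes\tau)(x,y)=(\sigma(x),\tau(y))$. The channel equivariance group $G_{\mathrm{ce}}$ is the group of pairs $(\sigma,\tau)\in\mathrm{Bij}(\mathcal{X})\times\mathrm{Bij}(\mathcal{Y})$ with $p(Y|X)\circ\sigma=\tau\circ p(Y|X)$, equivalently $p(\tau(y)|\sigma(x))=p(y|x)$ for all $x,y$; $\pi_{\mathrm{ce}}$ is the projection onto $G_{\mathrm{ce}}$-orbits of $\mathcal{X}\times\mathcal{Y}$. DIB problem: for finite $\mathcal{A}$, $p\in\Delta_{\mathcal{A}}$, exponential family $\mathcal{E}\subseteq\Delta_{\mathcal{A}}$ with closure $\mathrm{cl}\,\mathcal{E}$, encoder set $C\subseteq C(\mathcal{A},\mathcal{T})$, $D(p\|\mathcal{E}):=\inf_{r\in\mathrm{cl}\mathcal{E}}D(p\|r)$, $D(\kappa\cdot p\|\kappa\cdot\mathcal{E}):=\inf_{r\in\mathrm{cl}\mathcal{E}}D(\kappa\cdot p\|\kappa\cdot r)$ where $(\kappa\cdot r)(t)=\sum_a\kappa(t|a)r(a)$, and $\mathrm{DIB}(\lambda):=\operatorname{argmin}\{I_\kappa(A;T):\kappa\in C,\ D(\kappa\cdot p\|\kappa\cdot\mathcal{E})\ge\lambda\}$ for $0\le\lambda\le D(p\|\mathcal{E})$, with $I_\kappa$ computed from $p(a)\kappa(t|a)$. Channels compose by $(\mu\circ\kappa)(c|a)=\sum_b\mu(c|b)\kappa(b|a)$;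 bijections are deterministic channels. *)

(* Defs.v *)
From HB Require Import structures.
From mathcomp Require Import all_boot all_order all_algebra all_fingroup.
From mathcomp Require Import all_classical all_reals all_analysis.
Set Implicit Arguments. Unset Strict Implicit. Unset Printing Implicit Defensive.
Import Order.TTheory GRing.Theory Num.Theory.
Import numFieldNormedType.Exports.
Local Open Scope ring_scope.
Local Open Scope classical_set_scope.

Section DIB.
Variable R : realType.

Definition is_dist (A : finType) (r : A -> R) : Prop :=
  (forall a, 0 <= r a) /\ \sum_(a : A) r a = 1.

Definition kl_term (x y : R) : \bar R :=
  if x == 0 then 0%E else if y == 0 then +oo%E else (x * ln (x / y))%:E.

Definition KL (A : finType) (P Q : A -> R) : \bar R :=
  (\sum_(a : A) kl_term (P a) (Q a))%E.

Definition KLnat (P Q : nat -> R) : \bar R :=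
  (\sum_(t <oo) kl_term (P t) (Q t))%E.

Definition is_channel (A : finType) (k : A -> nat -> R) : Prop :=
  (forall a t, 0 <= k a t) /\
  (forall a, (fun n => \sum_(0 <= t < n) k a t) @ \oo --> (1 : R)).

Definition push (A : finType) (k : A -> nat -> R) (r : A -> R) : nat -> R :=
  fun t => \sum_(a : A) k a t * r a.

(* Mutual information I_kappa(A;T) computed from p(a) kappa(t|a):
   D(p(a)kappa(t|a) || p(a) (kappa.p)(t)), summed over a, then over t. *)
Definition mutinf (A : finType) (p : A -> R) (k : A -> nat -> R) : \bar R :=
  (\sum_(t <oo) \sum_(a : A) kl_term (p a * k a t) (p a * push k p t))%E.

(* Topological closure of a set of distributions on a finite set
   (pointwise = norm topology on R^A), via sequences. *)
Definition clos (A : finType) (E : set (A -> R)) : set (A -> R) :=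
  [set r | exists u : nat -> (A -> R), (forall n, E (u n)) /\
           forall a, (fun n => u n a) @ \oo --> r a].

Definition Dfam (A : finType) (p : A -> R) (E : set (A -> R)) : \bar R :=
  ereal_inf [set KL p r | r in clos E].

Definition Dfam_push (A : finType) (k : A -> nat -> R) (p : A -> R)
  (E : set (A -> R)) : \bar R :=
  ereal_inf [set KLnat (push k p) (push k r) | r in clos E].

Definition DIB (A : finType) (p : A -> R) (E : set (A -> R)) (lam : \bar R)
  : set (A -> nat -> R) :=
  [set k | [/\ is_channel k, (lam <= Dfam_push k p E)%E &
     forall k', is_channel k' -> (lam <= Dfam_push k' p E)%E ->
                (mutinf p k <= mutinf p k')%E]].

Definition E_ce (X Y : finType) : set ((X * Y)%type -> R) :=
  [set q | exists r : X -> R, is_dist r /\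
           q = fun a => r a.1 / #|Y|%:R].

Definition cond (X Y : finType) (p : (X * Y)%type -> R) (x : X) (y : Y) : R :=
  p (x, y) / \sum_(y' : Y) p (x, y').

Definition in_Gce (X Y : finType) (p : (X * Y)%type -> R)
  (s : {perm X}) (u : {perm Y}) : Prop :=
  forall x y, cond p (s x) (u y) = cond p x y.

Definition comp_bij (X Y : finType) (k : (X * Y)%type -> nat -> R)
  (s : {perm X}) (u : {perm Y}) : (X * Y)%type -> nat -> R :=
  fun a t => k (s a.1, u a.2) t.

Definition cond_equiv (X Y : finType) (p : (X * Y)%type -> R)
  (a a' : (X * Y)%type) : Prop :=
  cond p a.1 a.2 = cond p a'.1 a'.2.

Definition same_orbit_ce (X Y : finType) (p : (X * Y)%type -> R)
  (a a' : (X * Y)%type) : Prop :=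
  exists (s : {perm X}) (u : {perm Y}), in_Gce p s u /\ a' = (s a.1, u a.2).

End DIB.

(* Main.v *)
Require Import Defs.
From HB Require Import structures.
From mathcomp Require Import all_boot all_order all_algebra all_fingroup.
From mathcomp Require Import all_classical all_reals all_analysis.
From mathcomp Require Import ring lra.
Import Order.TTheory GRing.Theory Num.Theory.
Import numFieldNormedType.Exports.
Local Open Scope ring_scope.
Local Open Scope classical_set_scope.
Set Implicit Arguments. Unset Strict Implicit. Unset Printing Implicit Defensive.
Section Basic.
Variable R : realType.

Definition klr (x y : R) : R := if x == 0 then 0 else x * ln (x / y).

Lemma klr0y (y : R) : klr 0 y = 0.
Proof. by rewrite /klr eqxx. Qed.

Lemma klrE (x y : R) : 0 < x -> 0 < y -> klr x y = x * (ln x - ln y).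
Proof.
move=> x0 y0; rewrite /klr gt_eqF // ln_div //; by rewrite posrE.
Qed.

Lemma kl_termE (x y : R) : 0 <= x -> (0 < x -> 0 < y) -> @kl_term R x y = (klr x y)%:E.
Proof.
move=> x0 hy; rewrite /kl_term /klr; case: eqP => // /eqP xn0.
have xp : 0 < x by rewrite lt_def xn0.
by rewrite gt_eqF // hy.
Qed.

Lemma ln_le_sub1 (z : R) : 0 < z -> ln z <= z - 1.
Proof.
move=> z0; have := expR_ge1Dx (ln z); rewrite lnK ?posrE //.
move=> h; lra.
Qed.

Lemma ln_lt_sub1 (z : R) : 0 < z -> z != 1 -> ln z < z - 1.
Proof.
move=> z0 z1; have : ln z != 0 by rewrite ln_eq0.
move=> /expR_gt1Dx; rewrite lnK ?posrE //.
move=> h; lra.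
Qed.

Lemma gibbs (x y : R) : 0 <= x -> 0 < y -> x - y <= klr x y.
Proof.
move=> x0 y0; have [->|xp] := eqVneq x 0.
  by rewrite klr0y sub0r oppr_le0 ltW.
have xp' : 0 < x by rewrite lt_def xp.
rewrite klrE //.
have := ln_le_sub1 (divr_gt0 y0 xp'); rewrite ln_div ?posrE // => h.
have : x * (ln y - ln x) <= x * (y / x - 1) by rewrite ler_wpM2l // ltW.
have -> : x * (y / x - 1) = y - x.
  by rewrite mulrBr mulr1 mulrCA divff ?mulr1 // gt_eqF.
rewrite !mulrBr => h2; lra.
Qed.

Lemma gibbs_eq (x y : R) : 0 <= x -> 0 < y -> klr x y = x - y -> x = y.
Proof.
move=> x0 y0 e; apply/eqP/negPn/negP => xy.
have [x00|xp] := eqVneq x 0.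
  by move: e; rewrite x00 klr0y sub0r => /eqP; rewrite eq_sym oppr_eq0 gt_eqF.
have xp' : 0 < x by rewrite lt_def xp.
have yx : y / x != 1.
  apply/negP => /eqP h; move: xy; rewrite -[x]mul1r -h mulrAC -mulrA divff // mulr1 eqxx //.
have := ln_lt_sub1 (divr_gt0 y0 xp') yx; rewrite ln_div ?posrE // => h.
have : x * (ln y - ln x) < x * (y / x - 1) by rewrite ltr_pM2l.
have -> : x * (y / x - 1) = y - x.
  by rewrite mulrBr mulr1 mulrCA divff ?mulr1 // gt_eqF.
move: e; rewrite klrE // !mulrBr => e h2; lra.
Qed.

Lemma klr_ident (z zb Q : R) : 0 <= z -> 0 < zb -> 0 < Q ->
  klr z Q - klr zb Q - (ln (zb / Q) + 1) * (z - zb) = klr z zb - z + zb.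
Proof.
move=> z0 zb0 Q0; rewrite (klrE zb0 Q0) ln_div ?posrE //.
have [->|zn] := eqVneq z 0; first by rewrite !klr0y; ring.
have zp : 0 < z by rewrite lt_def zn.
rewrite !klrE //; ring.
Qed.

Lemma jensen (I : finType) (D : {pred I}) (w z : I -> R) (Q : R) :
  0 < Q -> (forall i, 0 <= w i) -> \sum_(i in D) w i = 1 ->
  (forall i, 0 <= z i) ->
  klr (\sum_(i in D) w i * z i) Q <= \sum_(i in D) w i * klr (z i) Q /\
  (\sum_(i in D) w i * klr (z i) Q = klr (\sum_(i in D) w i * z i) Q ->
     forall i, i \in D -> 0 < w i -> z i = \sum_(i in D) w i * z i).
Proof.
move=> Q0 w0 w1 z0; set zb := \sum_(i in D) _.
have zb0 : 0 <= zb by apply: sumr_ge0 => i _; rewrite mulr_ge0.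
have [zbe|zbn] := eqVneq zb 0.
  have wz0 : forall i, i \in D -> w i * z i = 0.
    by move=> i iD; apply: (psumr_eq0P _ zbe) => // j _; rewrite mulr_ge0.
  have R0 : \sum_(i in D) w i * klr (z i) Q = 0.
    apply: big1 => i iD; have := wz0 i iD => /eqP; rewrite mulf_eq0 => /orP[/eqP->|/eqP->].
      by rewrite mul0r.
    by rewrite klr0y mulr0.
  rewrite zbe klr0y R0; split => // _ i iD wp.
  by have := wz0 i iD => /eqP; rewrite mulf_eq0 gt_eqF //= => /eqP.
have zbp : 0 < zb by rewrite lt_def zbn.
set c := ln (zb / Q) + 1.
have key : \sum_(i in D) w i * klr (z i) Q - klr zb Q =
           \sum_(i in D) w i * (klr (z i) zb - z i + zb).
  have e1 : klr zb Q = \sum_(i in D) w i * klr zb Q by rewrite -mulr_suml w1 mul1r.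
  have e2 : 0 = \sum_(i in D) w i * (c * (z i - zb)).
    have e3 i : w i * (c * (z i - zb)) = c * (w i * z i) - c * zb * w i by ring.
    under eq_bigr do rewrite e3.
    by rewrite sumrB -!mulr_sumr w1 -/zb mulr1 subrr.
  rewrite e1 -sumrB -[RHS]addr0 [X in _ = _ + X]e2 -big_split /=; apply: eq_bigr => i _.
  rewrite -(klr_ident (z0 i) zbp Q0) /c; ring.
have g0 : forall i, 0 <= w i * (klr (z i) zb - z i + zb).
  by move=> i; rewrite mulr_ge0 //; have := gibbs (z0 i) zbp; lra.
split.
  by rewrite -subr_ge0 key; apply: sumr_ge0.
move=> /eqP; rewrite -subr_eq0 key => /eqP H i iD wp.
have := psumr_eq0P (fun j _ => g0 j) H iD.
move/eqP; rewrite mulf_eq0 gt_eqF //= => /eqP e.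
by apply: gibbs_eq => //; lra.
Qed.

Lemma cvg_sumR (I : Type) (r : seq I) (P : pred I) (f : I -> nat -> R) (l : I -> R) :
  (forall i, P i -> f i n @[n --> \oo] --> l i) ->
  \sum_(i <- r | P i) f i n @[n --> \oo] --> \sum_(i <- r | P i) l i.
Proof.
move=> H; elim: r => [|i r IH].
  rewrite big_nil; under eq_cvg do rewrite big_nil; exact: cvg_cst.
rewrite big_cons; under eq_cvg do rewrite big_cons.
case Pi: (P i) => //.
by apply: cvgD => //; exact: H.
Qed.

End Basic.
Section Series.
Variable R : realType.

Lemma series_EFin (v : nat -> R) (l : R) :
  (fun n => \sum_(0 <= t < n) v t) @ \oo --> l ->
  (\sum_(t <oo) (v t)%:E)%E = l%:E.
Proof.
move=> h.
rewrite (_ : (fun n => \sum_(0 <= t < n) (v t)%:E)%E =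
   EFin \o (fun n => \sum_(0 <= t < n) v t)); last first.
  by apply/funext => n /=; rewrite sumEFin.
by rewrite EFin_lim ?(cvg_lim _ h) //; apply/cvg_ex; exists l.
Qed.

Lemma series_eq (a b : nat -> R) :
  (forall t, 0 <= b t) -> (forall t, b t <= a t) ->
  (\sum_(t <oo) (a t)%:E <= \sum_(t <oo) (b t)%:E)%E ->
  (\sum_(t <oo) (a t)%:E < +oo)%E -> forall t, b t = a t.
Proof.
move=> b0 ba hle hfin t0; apply/eqP; rewrite eq_le ba /=; apply/negP => /negP.
rewrite -ltNge => lt0.
have a0 : forall t, 0 <= a t by move=> t; exact: le_trans (b0 t) (ba t).
have eA : (\sum_(t <oo) (a t)%:E =
          \sum_(t <oo) (b t)%:E + \sum_(t <oo) (a t - b t)%:E)%E.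
  rewrite -nneseriesD; last 2 first.
  - by move=> i _ _; rewrite lee_fin.
  - by move=> i _ _; rewrite lee_fin subr_ge0.
  by apply: eq_eseriesr => i _; rewrite -EFinD addrC subrK.
have hd : ((a t0 - b t0)%:E <= \sum_(t <oo) (a t - b t)%:E)%E.
  apply: le_trans (nneseries_lim_ge t0.+1 _); last first.
    by move=> i _ _; rewrite lee_fin subr_ge0.
  rewrite big_nat_recr //= sumEFin -EFinD lee_fin lerDr.
  by apply: sumr_ge0 => i _; rewrite subr_ge0.
have bfin : (\sum_(t <oo) (b t)%:E)%E \is a fin_num.
  rewrite ge0_fin_numE; last by apply: nneseries_ge0 => n _ _; rewrite lee_fin.
  apply: le_lt_trans hfin; apply: lee_nneseries.
    by move=> n _ _; rewrite lee_fin.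
  by move=> n _; rewrite lee_fin.
move: hle; rewrite eA; apply/negP; rewrite -ltNge.
apply: (@lt_le_trans _ _ (\sum_(t <oo) (b t)%:E + (a t0 - b t0)%:E)%E).
  by rewrite lteDl // lte_fin subr_gt0.
by rewrite leeD2l.
Qed.

End Series.
Section Group.
Variables (R : realType) (X Y : finType) (p : (X * Y)%type -> R).
Hypothesis p_pos : forall a, 0 < p a.
Variables (s : {perm X}) (u : {perm Y}).
Hypothesis hG : in_Gce p s u.

Let A := (X * Y)%type.

Definition gfun (a : A) : A := (s a.1, u a.2).
Lemma gfun_inj : injective gfun.
Proof.
move=> [x y] [x' y'] [] /perm_inj -> /perm_inj -> //.
Qed.
Definition gperm : {perm A} := perm gfun_inj.

Lemma gpermE a : gperm a = (s a.1, u a.2).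
Proof. by rewrite permE. Qed.

Lemma gpow i a : (gperm ^+ i)%g a = ((s ^+ i)%g a.1, (u ^+ i)%g a.2).
Proof.
elim: i a => [|i IH] a; first by rewrite !expg0 !perm1; case: a.
by rewrite !expgSr !permM IH gpermE.
Qed.

Lemma gce_pow i : in_Gce p (s ^+ i)%g (u ^+ i)%g.
Proof.
elim: i => [|i IH] x y; first by rewrite !expg0 !perm1.
by rewrite !expgSr !permM hG IH.
Qed.

Definition C := (<[gperm]>)%g.

Lemma C_cond h x y : h \in C -> cond p (h (x, y)).1 (h (x, y)).2 = cond p x y.
Proof. by case/cycleP => i ->; rewrite gpow /= gce_pow. Qed.

Lemma C_fst h x y y' : h \in C -> (h (x, y)).1 = (h (x, y')).1.
Proof. by case/cycleP => i ->; rewrite !gpow. Qed.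

Lemma gperm_C : gperm \in C.
Proof. exact: cycle_id. Qed.

Lemma sumC_mul (h : {perm A}) (F : {perm A} -> R) : h \in C ->
  \sum_(h' in C) F (h * h')%g = \sum_(h' in C) F h'.
Proof.
move=> hC; rewrite [RHS](reindex_inj (mulgI h)) /=; apply: eq_bigl => h'.
by rewrite groupMl.
Qed.

Lemma sumC_inv (F : {perm A} -> R) :
  \sum_(h in C) F (h^-1)%g = \sum_(h in C) F h.
Proof.
rewrite [RHS](reindex_inj invg_inj) /=; apply: eq_bigl => h'.
by rewrite groupV.
Qed.

Definition S (a : A) := \sum_(h in C) p (h a).

Lemma S_pos a : 0 < S a.
Proof.
rewrite /S (bigD1 1%g) ?group1 //= perm1.
apply: (lt_le_trans (p_pos a)); rewrite lerDl.
by apply: sumr_ge0 => h _; exact: ltW.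
Qed.

Lemma S_inv h a : h \in C -> S (h a) = S a.
Proof.
move=> hC; rewrite /S -(sumC_mul (fun h' => p (h' a)) hC).
by apply: eq_bigr => h' _; rewrite permM.
Qed.

Lemma core (f gg : A -> R) :
  \sum_a \sum_(h in C) f a * gg (h a) / S a =
  \sum_b gg b * (\sum_(h in C) f (h b)) / S b.
Proof.
rewrite exchange_big /=.
transitivity (\sum_(h in C) \sum_b f ((h^-1)%g b) * gg b / S b).
  apply: eq_bigr => h hC.
  rewrite (reindex_inj (@perm_inj _ (h^-1)%g)) /=; apply: eq_bigr => b _.
  by rewrite permKV S_inv // groupV.
rewrite exchange_big /=; apply: eq_bigr => b _.
rewrite -(sumC_inv (fun h => f (h b))) mulr_sumr mulr_suml.
by apply: eq_bigr => h _; ring.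
Qed.

Definition kt (k : A -> nat -> R) (a : A) (t : nat) : R :=
  \sum_(h in C) (p (h a) / S a) * k (h a) t.

Definition Phi (r : A -> R) (b : A) : R := p b * (\sum_(h in C) r (h b)) / S b.

Lemma push_kt k r t : push (kt k) r t = push k (Phi r) t.
Proof.
rewrite /push /kt.
transitivity (\sum_a \sum_(h in C) r a * (p (h a) * k (h a) t) / S a).
  apply: eq_bigr => a _; rewrite mulr_suml; apply: eq_bigr => h _; ring.
rewrite (core r (fun b => p b * k b t)); apply: eq_bigr => b _; rewrite /Phi; ring.
Qed.

Lemma Phi_p : Phi p = p.
Proof.
apply/funext => b; rewrite /Phi -/(S b) mulfK //; exact/lt0r_neq0/S_pos.
Qed.

Hypothesis p_sum : \sum_a p a = 1.

Lemma kt_channel k : is_channel k -> is_channel (kt k).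
Proof.
case=> k0 kc; split.
  move=> a t; apply: sumr_ge0 => h _; rewrite mulr_ge0 // divr_ge0 // ltW ?S_pos //.
move=> a.
have -> : (fun n => \sum_(0 <= t < n) kt k a t) =
    (fun n => \sum_(h in C) (p (h a) / S a) * \sum_(0 <= t < n) k (h a) t).
  apply/funext => n; rewrite /kt exchange_big /=; apply: eq_bigr => h _.
  by rewrite mulr_sumr.
have -> : (1 : R) = \sum_(h in C) (p (h a) / S a) * 1.
  under eq_bigr do rewrite mulr1.
  by rewrite -mulr_suml -/(S a) divff // gt_eqF // S_pos.
apply: cvg_sumR => h _; apply: cvgMl_tmp; exact: kc.
Qed.

Definition pX (x : X) := \sum_(y : Y) p (x, y).

Lemma pX_pos (x : X) (y : Y) : 0 < pX x.
Proof.
rewrite /pX (bigD1 y) //=; apply: (lt_le_trans (p_pos (x, y))); rewrite lerDl.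
by apply: sumr_ge0 => y' _; exact: ltW.
Qed.

Lemma p_split (b : A) : p b = pX b.1 * cond p b.1 b.2.
Proof.
case: b => x y /=; rewrite /cond -/(pX x) mulrC divfK // gt_eqF //; exact: pX_pos.
Qed.

Lemma cond_pos (x : X) (y : Y) : 0 < cond p x y.
Proof. rewrite /cond divr_gt0 //; exact: (pX_pos x y). Qed.

Lemma Phi_indep r : (forall a b : A, a.1 = b.1 -> r a = r b) ->
  forall x y y', Phi r (x, y) = Phi r (x, y').
Proof.
move=> rdep x y y'.
pose T (a : A) := \sum_(h in C) pX (h a).1.
have T_pos a : 0 < T a.
  rewrite /T (bigD1 1%g) ?group1 //= perm1.
  apply: (lt_le_trans (pX_pos a.1 a.2)); rewrite lerDl.
  by apply: sumr_ge0 => h _; exact: ltW (pX_pos _ (h a).2).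
have key (z : Y) : Phi r (x, z) = pX x * (\sum_(h in C) r (h (x, z))) / T (x, z).
  have eS : S (x, z) = cond p x z * T (x, z).
    rewrite /S /T mulr_sumr; apply: eq_bigr => h hC.
    by rewrite p_split C_cond // mulrC.
  rewrite /Phi eS p_split /=.
  have := cond_pos x z; have := T_pos (x, z); move=> h1 h2.
  by field; rewrite !gt_eqF.
rewrite !key; congr (_ * _ / _).
  by apply: eq_bigr => h hC; apply: rdep; exact: C_fst.
by apply: eq_bigr => h hC; rewrite (C_fst _ y y').
Qed.

Lemma sum_Phi r : \sum_a Phi r a = \sum_a r a.
Proof.
rewrite /Phi -(core r p); apply: eq_bigr => a _.
rewrite -mulr_suml -mulr_sumr -/(S a) -mulrA divff ?mulr1 //; exact/lt0r_neq0/S_pos.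
Qed.

Lemma Phi_ge0 r : (forall a, 0 <= r a) -> forall b, 0 <= Phi r b.
Proof.
move=> r0 b; rewrite /Phi; apply: divr_ge0; last exact: ltW (S_pos b).
apply: mulr_ge0; first exact: ltW. by apply: sumr_ge0 => h _; exact: r0.
Qed.

Notation E := (@E_ce R X Y).

Lemma sum_pair (F : A -> R) : \sum_a F a = \sum_x \sum_y F (x, y).
Proof. by rewrite pair_bigA; apply: eq_bigr => -[x y]. Qed.

Lemma Ynon : (0 < #|Y|)%N.
Proof.
case: (pickP (@predT Y)) => [y _|hY]; first by apply/card_gt0P; exists y.
move: p_sum; rewrite sum_pair big1 => [/eqP|x _]; first by rewrite eq_sym oner_eq0.
by rewrite big_pred0.
Qed.

Lemma Npos : (0 : R) < #|Y|%:R.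
Proof. by rewrite ltr0n Ynon. Qed.

Lemma sum_constY (c : R) : \sum_(y : Y) c = c * #|Y|%:R.
Proof. by rewrite sumr_const mulr_natr. Qed.

Lemma Phi_E r : E r -> E (Phi r).
Proof.
case=> rho [[rho0 rho1] re].
have rdep : forall a b : A, a.1 = b.1 -> r a = r b by move=> a b e; rewrite re /= e.
have r0 : forall a, 0 <= r a by move=> a; rewrite re divr_ge0 // ltW // Npos.
exists (fun x => \sum_(y : Y) Phi r (x, y)); split; first split.
- by move=> x; apply: sumr_ge0 => y _; apply: Phi_ge0.
- rewrite -(sum_pair (Phi r)) sum_Phi re sum_pair -[in RHS]rho1; apply: eq_bigr => x _.
  by rewrite /= sum_constY divfK // gt_eqF // Npos.
- apply/funext => -[x y] /=.
  rewrite (eq_bigr (fun _ => Phi r (x, y))) => [|y' _]; last exact: Phi_indep.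
  by rewrite sum_constY mulfK // gt_eqF // Npos.
Qed.

Lemma Phi_clos r : clos E r -> clos E (Phi r).
Proof.
case=> useq [uE ucv]; exists (fun n => Phi (useq n)); split.
  by move=> n; apply: Phi_E.
move=> b; rewrite /Phi; apply: cvgMr_tmp; apply: cvgMl_tmp.
by apply: cvg_sumR => h _; exact: ucv.
Qed.

Lemma Dfam_kt k : (Dfam_push k p E <= Dfam_push (kt k) p E)%E.
Proof.
rewrite /Dfam_push; apply/ereal_infP => _ [r rc <-].
have e1 : push (kt k) p = push k p by apply/funext => t; rewrite push_kt Phi_p.
have e2 : push (kt k) r = push k (Phi r) by apply/funext => t; rewrite push_kt.
rewrite e1 e2; apply: ereal_inf_lbound; exists (Phi r) => //; exact: Phi_clos.
Qed.

Lemma Q_ge k t a : (forall b, 0 <= k b t) -> k a t * p a <= push k p t.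
Proof.
move=> k0; rewrite /push (bigD1 a) //= lerDl.
by apply: sumr_ge0 => b _; rewrite mulr_ge0 // ltW.
Qed.

Lemma Q0_all k t : (forall b, 0 <= k b t) -> push k p t = 0 -> forall b, k b t = 0.
Proof.
move=> k0 Q0 b; apply/eqP; rewrite eq_le k0 andbT.
have := Q_ge b k0; rewrite Q0 pmulr_lle0 //.
Qed.

Definition Tk k t := \sum_a p a * klr (k a t) (push k p t).

Lemma mutinfE k : (forall a t, 0 <= k a t) ->
  mutinf p k = (\sum_(t <oo) (Tk k t)%:E)%E.
Proof.
move=> k0; rewrite /mutinf; apply: eq_eseriesr => t _.
rewrite /Tk -sumEFin; apply: eq_bigr => a _.
have [ka0|kan] := eqVneq (k a t) 0.
  by rewrite ka0 mulr0 /kl_term eqxx klr0y mulr0.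
have kp : 0 < k a t by rewrite lt_def kan k0.
have Qp : 0 < push k p t by apply: lt_le_trans (Q_ge a (k0^~ t)); rewrite mulr_gt0.
rewrite kl_termE ?mulr_ge0 ?ltW //; last by move=> _; rewrite mulr_gt0.
congr EFin; rewrite !klrE ?mulr_gt0 // !lnM ?posrE //; ring.
Qed.

Lemma klrQQ (Q : R) : klr Q Q = 0.
Proof.
have [->|Qn] := eqVneq Q 0; first by rewrite klr0y.
by rewrite /klr (negbTE Qn) divff // ln1 mulr0.
Qed.

Lemma jensenT (w z : A -> R) (Q : R) :
  0 < Q -> (forall i, 0 <= w i) -> \sum_i w i = 1 -> (forall i, 0 <= z i) ->
  klr (\sum_i w i * z i) Q <= \sum_i w i * klr (z i) Q.
Proof.
move=> Q0 w0 w1 z0; have := @jensen R A predT w z Q Q0 w0.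
by rewrite /= w1 => /(_ erefl z0) [].
Qed.

Lemma Tk_ge0 k t : (forall a, 0 <= k a t) -> 0 <= Tk k t.
Proof.
move=> k0; rewrite /Tk.
have [Q0|Qn] := eqVneq (push k p t) 0.
  by rewrite Q0; apply: sumr_ge0 => a _; rewrite (Q0_all k0 Q0) klr0y mulr0.
have Qp : 0 < push k p t by rewrite lt_def Qn /push sumr_ge0 // => a _; rewrite mulr_ge0 // ltW.
have := @jensenT p (fun a => k a t) _ Qp (fun a => ltW (p_pos a)) p_sum k0.
have -> : \sum_i p i * k i t = push k p t by apply: eq_bigr => a _; rewrite mulrC.
by rewrite klrQQ.
Qed.

Lemma p_le1 a : p a <= 1.
Proof.
rewrite -p_sum (bigD1 a) //= lerDl; apply: sumr_ge0 => b _; exact: ltW.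
Qed.

Lemma c_ge0 a : 0 <= p a * - ln (p a).
Proof. by apply: mulr_ge0; [exact: ltW | rewrite oppr_ge0 ln_le0 // p_le1]. Qed.

Lemma Tk_bound k t : (forall a, 0 <= k a t) ->
  Tk k t <= \sum_a (p a * - ln (p a)) * k a t.
Proof.
move=> k0; rewrite /Tk; apply: ler_sum => a _.
have [ka0|kan] := eqVneq (k a t) 0; first by rewrite ka0 klr0y !mulr0.
have kp : 0 < k a t by rewrite lt_def kan k0.
have Qp : 0 < push k p t by apply: lt_le_trans (Q_ge a k0); rewrite mulr_gt0.
have h1 : ln (k a t * p a) <= ln (push k p t).
  by rewrite ler_ln ?posrE ?mulr_gt0 // Q_ge.
rewrite lnM ?posrE // in h1.
rewrite klrE //.
have pp := p_pos a.
have h2 : 0 < p a * k a t by rewrite mulr_gt0.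
have H : p a * k a t * (ln (k a t) - ln (push k p t)) <= p a * k a t * - ln (p a).
  by apply: ler_wpM2l; [exact: ltW | lra].
by rewrite mulrA [p a * - ln (p a) * k a t]mulrAC.
Qed.

Lemma chan_series (k : A -> nat -> R) a : is_channel k -> (\sum_(t <oo) (k a t)%:E)%E = 1%:E.
Proof. by case=> _ kc; apply: series_EFin; exact: kc. Qed.

Lemma mutinf_fin (k : A -> nat -> R) : is_channel k -> (\sum_(t <oo) (Tk k t)%:E < +oo)%E.
Proof.
move=> kc; have k0 := kc.1.
apply: (@le_lt_trans _ _ (\sum_(t <oo) (\sum_a (p a * - ln (p a)) * k a t)%:E)%E).
  apply: lee_nneseries => [n _ _|n _]; rewrite lee_fin; [exact: Tk_ge0 | exact: Tk_bound].
rewrite (eq_eseriesr (g := fun t => \sum_a ((p a * - ln (p a)) * k a t)%:E)%E); last first.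
  by move=> t _; rewrite sumEFin.
rewrite nneseries_sum; last by move=> a j _; rewrite lee_fin mulr_ge0 // c_ge0.
rewrite (eq_bigr (fun a => (p a * - ln (p a))%:E)%E); last first.
  move=> a _; rewrite (eq_eseriesr (g := fun t => ((p a * - ln (p a))%:E * (k a t)%:E)%E)) //.
  rewrite nneseriesZl; last by move=> n _; rewrite lee_fin.
  by rewrite chan_series // mule1.
by rewrite sumEFin ltry.
Qed.

Lemma Tkt k t : (forall a, 0 <= k a t) ->
  Tk (kt k) t <= Tk k t /\
  (Tk (kt k) t = Tk k t -> forall a, k (gperm a) t = k a t).
Proof.
move=> k0.
have eQ : push (kt k) p t = push k p t by rewrite push_kt Phi_p.
rewrite /Tk eQ; set Q := push k p t.
have [Q0|Qn] := eqVneq Q 0.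
  have kz := Q0_all k0 Q0.
  have ktz a : kt k a t = 0 by rewrite /kt big1 // => h _; rewrite kz mulr0.
  split; last by move=> _ a; rewrite !kz.
  by rewrite Q0 !big1 // => a _; rewrite ?ktz ?kz klr0y mulr0.
have Qp : 0 < Q by rewrite lt_def Qn /Q /push sumr_ge0 // => a _; rewrite mulr_ge0 // ltW.
have w0 a : forall h : {perm A}, 0 <= p (h a) / S a by move=> h; rewrite divr_ge0 // ltW ?S_pos.
have w1 a : \sum_(h in C) p (h a) / S a = 1.
  by rewrite -mulr_suml -/(S a) divff // gt_eqF // S_pos.
have J a := @jensen R _ (mem C) (fun h => p (h a) / S a) (fun h => k (h a) t) Q Qp (w0 a) (w1 a) (fun h => k0 (h a)).
have eR : \sum_a p a * (\sum_(h in C) p (h a) / S a * klr (k (h a) t) Q) =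
          \sum_b p b * klr (k b t) Q.
  transitivity (\sum_a \sum_(h in C) p a * (p (h a) * klr (k (h a) t) Q) / S a).
    by apply: eq_bigr => a _; rewrite mulr_sumr; apply: eq_bigr => h _; ring.
  rewrite (core p (fun b => p b * klr (k b t) Q)); apply: eq_bigr => b _.
  by rewrite -/(S b) mulfK // gt_eqF // S_pos.
split.
  rewrite -eR; apply: ler_sum => a _; apply: ler_wpM2l; [exact: ltW | exact: (J a).1].
move=> heq a.
have dge0 b : 0 <= p b * (\sum_(h in C) p (h b) / S b * klr (k (h b) t) Q) - p b * klr (kt k b t) Q.
  rewrite -mulrBr; apply: mulr_ge0; [exact: ltW | rewrite subr_ge0; exact: (J b).1].
have hs : \sum_b (p b * (\sum_(h in C) p (h b) / S b * klr (k (h b) t) Q) - p b * klr (kt k b t) Q) = 0.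
  by rewrite sumrB eR heq subrr.
have H0 := psumr_eq0P (fun b _ => dge0 b) hs.
move: (H0 a isT); rewrite -mulrBr => /eqP; rewrite mulf_eq0 gt_eqF //= subr_eq0 => /eqP he.
have J2 := (J a).2 he.
have wp (h : {perm A}) : 0 < p (h a) / S a by rewrite divr_gt0 // S_pos.
have e1 := J2 _ gperm_C (wp gperm).
have e2 := J2 _ (group1 C) (wp 1%g).
by rewrite /= perm1 in e2; rewrite /= e1 -e2.
Qed.

Lemma core_inv (lam : \bar R) k : DIB p E lam k -> comp_bij k s u = k.
Proof.
case=> kc klam kmin.
have ktc := kt_channel kc.
have ktlam : (lam <= Dfam_push (kt k) p E)%E := le_trans klam (Dfam_kt k).
have hle := kmin _ ktc ktlam.
rewrite (mutinfE kc.1) (mutinfE ktc.1) in hle.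
have heq := series_eq (fun t => Tk_ge0 (fun a => ktc.1 a t))
  (fun t => (Tkt (fun a => kc.1 a t)).1) hle (mutinf_fin kc).
apply/funext => a; apply/funext => t.
by rewrite /comp_bij -gpermE ((Tkt (fun a => kc.1 a t)).2 (heq t)).
Qed.
End Group.

Lemma cvg_ge0 (R : realType) (v : nat -> R) (l : R) :
  v @ \oo --> l -> (forall n, 0 <= v n) -> 0 <= l.
Proof.
move=> h v0; rewrite -(cvg_lim _ h) //; apply: limr_ge; first by apply/cvg_ex; exists l.
by near=> n; exact: v0.
Unshelve. all: by end_near.
Qed.

Lemma cvg_eq (R : realType) (v : nat -> R) (l l' : R) :
  v @ \oo --> l -> v @ \oo --> l' -> l = l'.
Proof. by move=> h h'; rewrite -(cvg_lim _ h) // -(cvg_lim _ h'). Qed.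

Lemma kl_term_ge (R : realType) (x y : R) : 0 <= x -> 0 <= y ->
  ((x - y)%:E <= kl_term x y)%E.
Proof.
move=> x0 y0; rewrite /kl_term; case: eqP => [->|xn]; first by rewrite sub0r lee_fin oppr_le0.
case: eqP => [_|yn]; first exact: leey.
have yp : 0 < y by rewrite lt_def y0 andbT; apply/eqP.
have := gibbs x0 yp; rewrite /klr; case: eqP => // _ h; by rewrite lee_fin.
Qed.

Section Backward.
Variables (R : realType) (X Y : finType) (p : (X * Y)%type -> R).
Hypothesis p_pos : forall a, 0 < p a.
Hypothesis p_sum : \sum_a p a = 1.
Let A := (X * Y)%type.
Notation E := (@E_ce R X Y).
Let N : R := #|Y|%:R.

Definition q0 (a : A) : R := pX p a.1 / N.

Lemma q0_pos a : 0 < q0 a.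
Proof. by rewrite /q0 divr_gt0 ?(pX_pos p_pos _ a.2) ?(Npos p_sum). Qed.

Lemma q0_E : E q0.
Proof.
exists (pX p); split => //; split.
  by move=> x; apply: sumr_ge0 => y _; exact: ltW.
by rewrite -p_sum (sum_pair p).
Qed.

Lemma q0_clos : clos E q0.
Proof. by exists (fun _ => q0); split => [n|a]; [exact: q0_E | exact: cvg_cst]. Qed.

Lemma ratio_q0 a : p a / q0 a = N * cond p a.1 a.2.
Proof.
rewrite /q0 (p_split p_pos a); have := pX_pos p_pos a.1 a.2; have := Npos p_sum.
by rewrite -/N => h1 h2; field; rewrite !gt_eqF.
Qed.

Lemma clos_struct r : clos E r ->
  [/\ forall a, 0 <= r a, forall x y y', r (x, y) = r (x, y') & \sum_a r a = 1].
Proof.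
case=> useq [uE ucv].
have ufo n : exists rho, is_dist rho /\ useq n = fun a => rho a.1 / N by exact: uE.
split.
- move=> a; apply: (cvg_ge0 (ucv a)) => n.
  have [rho [[rho0 _] ->]] := ufo n; rewrite divr_ge0 // ltW // (Npos p_sum).
- move=> x y y'; apply: (cvg_eq (ucv (x, y))).
  have -> : (fun n => useq n (x, y)) = (fun n => useq n (x, y')).
    by apply/funext => n; have [rho [_ ->]] := ufo n.
  exact: ucv.
- have h1 : (fun n => \sum_a useq n a) @ \oo --> \sum_a r a.
    by apply: cvg_sumR => a _; exact: ucv.
  suff e1 : (fun n => \sum_a useq n a) = (fun _ => 1).
    by rewrite e1 in h1; apply: (cvg_eq h1); exact: cvg_cst.
    apply/funext => n; have [rho [[_ rho1] ->]] := ufo n.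
    rewrite sum_pair -rho1; apply: eq_bigr => x _.
    by rewrite /= sum_constY divfK // gt_eqF // (Npos p_sum).
Qed.

Lemma KL_q0 : KL p q0 = (\sum_a klr (p a) (q0 a))%:E.
Proof.
rewrite /KL -sumEFin; apply: eq_bigr => a _.
by rewrite kl_termE ?ltW ?p_pos // => _; exact: q0_pos.
Qed.

Lemma Dfam_ge : (KL p q0 <= Dfam p E)%E.
Proof.
apply/ereal_infP => _ [r rc <-].
have [r0 rdep r1] := clos_struct rc.
have [[a ra]|rpos] := pselect (exists a, r a = 0).
  rewrite [X in (_ <= X)%E]/KL (bigD1 a) //=.
  have -> : @kl_term R (p a) (r a) = +oo%E by rewrite /kl_term ra gt_eqF ?p_pos // eqxx.
  rewrite addye ?leey //.
  rewrite gt_eqF //; apply: (@lt_le_trans _ _ (\sum_(b | b != a) (p b - r b))%:E).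
    exact: ltNyr.
  rewrite -sumEFin; apply: lee_sum => b _; apply: kl_term_ge; [exact: ltW | exact: r0].
have rp : forall a, 0 < r a.
  move=> a; rewrite lt_def r0 andbT; apply/eqP => h; apply: rpos; by exists a.
have -> : KL p r = (\sum_a klr (p a) (r a))%:E.
  rewrite /KL -sumEFin; apply: eq_bigr => a _.
  by rewrite kl_termE ?ltW ?p_pos.
rewrite KL_q0 lee_fin -subr_ge0 -sumrB.
have hsum : \sum_a p a * (r a / q0 a) = 1.
  rewrite (sum_pair (fun a => p a * (r a / q0 a))) -r1 (sum_pair r); apply: eq_bigr => x _.
  have ey y : r (x, y) = (\sum_(y' : Y) r (x, y')) / N.
    rewrite (eq_bigr (fun _ => r (x, y))) => [|y' _]; last exact: rdep.
    by rewrite sum_constY mulfK // gt_eqF // (Npos p_sum).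
  under eq_bigr => y _ do rewrite ey /q0 /=.
  have hx := pX_pos p_pos x.
  have Nn := Npos p_sum.
  transitivity ((\sum_y p (x, y)) * ((\sum_y' r (x, y')) / pX p x)).
    rewrite [RHS]mulr_suml; apply: eq_bigr => y _.
    by field; rewrite !gt_eqF ?(hx y).
  have /card_gt0P [y0 _] := Ynon p_sum.
  by rewrite -/(pX p x) mulrCA divff ?mulr1 // gt_eqF // (hx y0).
have e0 : \sum_a p a * (1 - r a / q0 a) = 0.
  by under eq_bigr do rewrite mulrBr mulr1; rewrite sumrB p_sum hsum subrr.
apply: (@le_trans _ _ (\sum_a p a * (1 - r a / q0 a))); first by rewrite e0.
apply: ler_sum => a _.
have H := ln_le_sub1 (divr_gt0 (rp a) (q0_pos a)).
rewrite ln_div ?posrE ?rp ?q0_pos // in H.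
have H2 := ler_wpM2l (ltW (p_pos a)) H.
rewrite !klrE ?p_pos ?rp ?q0_pos //.
rewrite !mulrBr mulr1 in H2 *; lra.
Qed.


Lemma push_ge k (r : A -> R) t a : (forall b, 0 <= k b t) -> (forall b, 0 <= r b) ->
  k a t * r a <= push k r t.
Proof.
move=> k0 r0; rewrite /push (bigD1 a) //= lerDl.
by apply: sumr_ge0 => b _; rewrite mulr_ge0.
Qed.

Lemma push_ge0 k (r : A -> R) t : (forall b, 0 <= k b t) -> (forall b, 0 <= r b) ->
  0 <= push k r t.
Proof. by move=> k0 r0; apply: sumr_ge0 => b _; rewrite mulr_ge0. Qed.

Lemma Qt0_all k t : (forall b, 0 <= k b t) -> push k q0 t = 0 -> forall b, k b t = 0.
Proof.
move=> k0 Q0 b; apply/eqP; rewrite eq_le k0 andbT.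
have := push_ge b k0 (fun b => ltW (q0_pos b)); rewrite Q0 pmulr_lle0 //; exact: q0_pos.
Qed.

Lemma jensenA (w z : A -> R) (Q : R) :
  0 < Q -> (forall i, 0 <= w i) -> \sum_i w i = 1 -> (forall i, 0 <= z i) ->
  klr (\sum_i w i * z i) Q <= \sum_i w i * klr (z i) Q /\
  (\sum_i w i * klr (z i) Q = klr (\sum_i w i * z i) Q ->
     forall i, 0 < w i -> z i = \sum_i w i * z i).
Proof.
move=> Q0 w0 w1 z0; have := @jensen R A predT w z Q Q0 w0.
rewrite /= w1 => /(_ erefl z0) [h1 h2]; split => // he i wi; exact: h2.
Qed.

Lemma DPt k t : (forall b, 0 <= k b t) ->
  klr (push k p t) (push k q0 t) <= \sum_a k a t * klr (p a) (q0 a) /\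
  (klr (push k p t) (push k q0 t) = \sum_a k a t * klr (p a) (q0 a) ->
   forall a b, 0 < k a t -> 0 < k b t -> cond p a.1 a.2 = cond p b.1 b.2).
Proof.
move=> k0; set P := push k p t; set Qt := push k q0 t.
have [Q0|Qn] := eqVneq Qt 0.
  have kz := Qt0_all k0 Q0.
  have P0 : P = 0 by rewrite /P /push big1 // => b _; rewrite kz mul0r.
  rewrite P0 klr0y big1 => [|b _]; last by rewrite kz mul0r.
  by split => // _ a b; rewrite kz ltxx.
have Qp : 0 < Qt by rewrite lt_def Qn push_ge0 // => b; exact: ltW (q0_pos b).
pose w a := k a t * q0 a / Qt.
pose z a := p a / q0 a.
have w0 a : 0 <= w a.
  by apply: divr_ge0; [apply: mulr_ge0; [exact: k0 | exact: ltW (q0_pos a)] | exact: ltW].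
have w1 : \sum_a w a = 1 by rewrite /w -mulr_suml -/(push k q0 t) -/Qt divff // gt_eqF.
have z0 a : 0 <= z a by apply: divr_ge0; exact: ltW (p_pos a) || exact: ltW (q0_pos a).
have [J1 J2] := jensenA ltr01 w0 w1 z0.
have ezb : \sum_a w a * z a = P / Qt.
  rewrite /P /push mulr_suml; apply: eq_bigr => a _; rewrite /w /z.
  by have := q0_pos a; move=> hq; field; rewrite !gt_eqF.
have id1 : klr P Qt = Qt * klr (P / Qt) 1.
  have [->|Pn] := eqVneq P 0; first by rewrite mul0r !klr0y mulr0.
  rewrite /klr (negbTE Pn) mulf_eq0 invr_eq0 (negbTE Pn) (negbTE Qn) /= divr1.
  by rewrite mulrA mulrCA divff ?mulr1 // gt_eqF.
have id2 : \sum_a k a t * klr (p a) (q0 a) = Qt * \sum_a w a * klr (z a) 1.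
  rewrite mulr_sumr; apply: eq_bigr => a _; rewrite /w /z /klr.
  rewrite (gt_eqF (p_pos a)) mulf_eq0 (gt_eqF (p_pos a)) invr_eq0 (gt_eqF (q0_pos a)) /= divr1.
  by have := q0_pos a; move=> hq; field; rewrite !gt_eqF.
rewrite ezb in J1 J2.
split.
  by rewrite id1 id2; apply: ler_wpM2l => //; exact: ltW.
rewrite id1 id2 => /(mulfI Qn) /esym /J2 hz a b ka kb.
have wp c : 0 < k c t -> 0 < w c.
  by move=> kc; apply: divr_gt0 => //; apply: mulr_gt0 => //; exact: q0_pos.
have := hz a (wp a ka); rewrite -(hz b (wp b kb)) /z !ratio_q0.
by move/(mulfI (lt0r_neq0 (Npos p_sum))).
Qed.


Lemma q0_sum : \sum_a q0 a = 1.
Proof.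
rewrite sum_pair -p_sum (sum_pair p); apply: eq_bigr => x _.
by rewrite /q0 /= sum_constY divfK // gt_eqF // (Npos p_sum).
Qed.

Lemma chan_le1 (k : A -> nat -> R) a n : is_channel k -> \sum_(0 <= t < n) k a t <= 1.
Proof.
case=> k0 kc.
have nd := @nondecreasing_series R (k a) xpredT 0 (fun t _ _ => k0 a t).
have hc : cvgn (fun n => \sum_(0 <= t < n) k a t) by apply/cvg_ex; exists 1; exact: kc.
by have := nondecreasing_cvgn_le nd hc n; rewrite (cvg_lim _ (kc a)).
Qed.

Lemma DP (k : A -> nat -> R) a b t0 : is_channel k -> 0 < k a t0 -> 0 < k b t0 ->
  cond p a.1 a.2 != cond p b.1 b.2 ->
  (KLnat (push k p) (push k q0) < KL p q0)%E.
Proof.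
move=> kch ka kb hne; case: (kch) => k0 kc.
set g := fun t => klr (push k p t) (push k q0 t).
set F := fun t => \sum_c k c t * klr (p c) (q0 c).
set e := fun t => F t - g t.
have e0 t : 0 <= e t by rewrite /e subr_ge0; exact: (DPt (k0^~ t)).1.
have et0 : 0 < e t0.
  rewrite lt_def e0 andbT /e subr_eq0; apply/eqP => h.
  by apply: (negP hne); apply/eqP; exact: (DPt (k0^~ t0)).2 (esym h) a b ka kb.
have KLe : KLnat (push k p) (push k q0) = (\sum_(t <oo) (g t)%:E)%E.
  rewrite /KLnat; apply: eq_eseriesr => t _; apply: kl_termE.
    exact: push_ge0 (k0^~ t) (fun c => ltW (p_pos c)).
  move=> Pp; have Q0' : 0 <= push k q0 t := push_ge0 (k0^~ t) (fun c => ltW (q0_pos c)).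
  rewrite lt_def Q0' andbT.
  apply/eqP => Q0; move: Pp; rewrite /push big1 ?ltxx // => c _.
  by rewrite (Qt0_all (k0^~ t) Q0) mul0r.
have Fcv : (fun n => \sum_(0 <= t < n) F t) @ \oo --> \sum_c klr (p c) (q0 c).
  have -> : (fun n => \sum_(0 <= t < n) F t) =
      (fun n => \sum_c klr (p c) (q0 c) * \sum_(0 <= t < n) k c t).
    apply/funext => n; rewrite /F exchange_big /=; apply: eq_bigr => c _.
    by rewrite mulr_sumr; apply: eq_bigr => t _; exact: mulrC.
  have hc c : (fun n => klr (p c) (q0 c) * \sum_(0 <= t < n) k c t) @ \oo --> klr (p c) (q0 c) * 1.
    by apply: cvgMl_tmp; exact: kc.
  have := @cvg_sumR R _ (index_enum A) xpredT
    (fun c n => klr (p c) (q0 c) * \sum_(0 <= t < n) k c t)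
    (fun c => klr (p c) (q0 c) * 1) (fun c _ => hc c).
  have e1 : \sum_(c <- index_enum A | xpredT c) klr (p c) (q0 c) * 1 = \sum_c klr (p c) (q0 c).
    by apply: eq_bigr => c _; rewrite mulr1.
  by rewrite e1.
have Qb n : \sum_(0 <= t < n) push k q0 t <= 1.
  rewrite /push exchange_big /= -q0_sum; apply: ler_sum => c _.
  rewrite -mulr_suml -[X in _ <= X]mul1r; apply: ler_wpM2r; first exact: ltW (q0_pos c).
  exact: chan_le1.
have gLow t : - push k q0 t <= g t.
  rewrite /g; have [Q0|Qn] := eqVneq (push k q0 t) 0.
    have -> : push k p t = 0.
      by rewrite /push big1 // => c _; rewrite (Qt0_all (k0^~ t) Q0) mul0r.
    by rewrite klr0y Q0 oppr0.
  have Qp : 0 < push k q0 t.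
    by rewrite lt_def Qn push_ge0 // => c; exact: ltW (q0_pos c).
  have P0 : 0 <= push k p t by apply: push_ge0 => // c; exact: ltW (p_pos c).
  have := gibbs P0 Qp; lra.
pose En n := \sum_(0 <= t < n) e t.
have Enb : has_ubound (range En).
  have Fc : cvgn (fun n => \sum_(0 <= t < n) F t) by apply/cvg_ex; eexists; exact: Fcv.
  have [M hM] := cvg_has_ub Fc.
  exists (M + 1) => _ [n _ <-].
  have h1 : \sum_(0 <= t < n) F t <= M.
    apply: le_trans (ler_norm _) _; apply: hM; by exists n.
  have h2 : - \sum_(0 <= t < n) push k q0 t <= \sum_(0 <= t < n) g t.
    by rewrite -sumrN; apply: ler_sum => t _; exact: gLow.
  have h3 := Qb n.
  have -> : En n = \sum_(0 <= t < n) F t - \sum_(0 <= t < n) g t by rewrite /En sumrB.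
  lra.
have End := @nondecreasing_series R e xpredT 0 (fun n _ _ => e0 n).
have Ecv : cvgn En := nondecreasing_is_cvgn End Enb.
have Elp : 0 < limn En.
  apply: (lt_le_trans et0); apply: le_trans (nondecreasing_cvgn_le End Ecv t0.+1).
  rewrite /En big_nat_recr //= lerDr; exact: sumr_ge0.
have Gcv : (fun n => \sum_(0 <= t < n) g t) @ \oo --> \sum_c klr (p c) (q0 c) - limn En.
  have -> : (fun n => \sum_(0 <= t < n) g t) = (fun n => \sum_(0 <= t < n) F t - En n).
    apply/funext => n; rewrite /En -sumrB; apply: eq_bigr => t _; rewrite /e; ring.
  by apply: cvgB => //; exact: Ecv.
rewrite KLe (series_EFin Gcv) KL_q0 lte_fin; lra.
Qed.

End Backward.

Lemma backward (R : realType) (X Y : finType) (p : (X * Y)%type -> R)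
  (p_pos : forall a, 0 < p a) (p_sum : \sum_a p a = 1)
  (s : {perm X}) (u : {perm Y}) (k : (X * Y)%type -> nat -> R) :
  DIB p (@E_ce R X Y) (Dfam p (@E_ce R X Y)) k -> comp_bij k s u = k -> in_Gce p s u.
Proof.
move=> [kc klam _] hk x y.
case: (eqVneq (cond p (s x) (u y)) (cond p x y)) => // hne; exfalso.
pose a : (X * Y)%type := (x, y).
pose b : (X * Y)%type := (s x, u y).
have kab t : k b t = k a t.
  by have := congr1 (fun f => f a t) hk; rewrite /comp_bij.
have [t kt] : exists t, 0 < k a t.
  case: (pselect (exists t, 0 < k a t)) => // hn; exfalso.
  have k0 t : k a t = 0.
    apply/eqP; rewrite eq_le kc.1 andbT leNgt; apply/negP => h; apply: hn; by exists t.
  have h1 := kc.2 a.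
  have e1 : (fun n => \sum_(0 <= t < n) k a t) = (fun _ => 0).
    by apply/funext => n; rewrite big1 // => i _; exact: k0.
  rewrite e1 in h1.
  have : (1 : R) = 0 by apply: (cvg_eq h1); exact: cvg_cst.
  by move/eqP; rewrite oner_eq0.
have hlt := DP p_pos p_sum kc (a := b) (b := a) (t0 := t) (_ : 0 < k b t) kt hne.
rewrite kab in hlt; have {}hlt := hlt kt.
have h1 := Dfam_ge p_pos p_sum.
have h3 : (Dfam_push k p (@E_ce R X Y) <= KLnat (push k p) (push k (q0 p)))%E.
  apply: ereal_inf_lbound; exists (q0 p) => //; exact: q0_clos.
have := le_lt_trans (le_trans h1 (le_trans klam h3)) hlt.
by rewrite ltxx.
Qed.

Section Example.
Variable R : realType.
Let A3 := ('I_3 * 'I_2)%type.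

Definition tbl (a : A3) : nat := nth 0%N [:: 2; 8; 8; 2; 3; 7]%N (2 * a.1 + a.2).

Definition qex (a : A3) : R := (tbl a)%:R / 30%:R.

Lemma tbl_pos a : (0 < tbl a)%N.
Proof. by case: a => -[[|[|[|i]]] Hi] -[[|[|j]] Hj]. Qed.

Lemma qex_pos a : 0 < qex a.
Proof. by rewrite /qex divr_gt0 // ltr0n tbl_pos. Qed.

Lemma qex_sum : \sum_a qex a = 1.
Proof.
rewrite sum_pair /qex.
rewrite !big_ord_recl !big_ord0 /=.
by rewrite /tbl /=; field.
Qed.

Lemma cond_ex (x : 'I_3) (y : 'I_2) : cond qex x y = (tbl (x, y))%:R / 10%:R.
Proof.
rewrite /cond /qex !big_ord_recl big_ord0 /=.
by case: x => -[|[|[|i]]] Hi // ; case: y => -[|[|j]] Hj //; rewrite /tbl /=; field.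
Qed.

Lemma ex_iii : ~ (forall a a', cond_equiv qex a a' <-> same_orbit_ce qex a a').
Proof.
move=> H.
pose i0 : 'I_3 := ord0. pose i1 : 'I_3 := Ordinal (isT : (1 < 3)%N).
pose i2 : 'I_3 := Ordinal (isT : (2 < 3)%N).
pose j0 : 'I_2 := ord0. pose j1 : 'I_2 := Ordinal (isT : (1 < 2)%N).
have := (H (i0, j0) (i1, j1)).1.
rewrite /cond_equiv /= !cond_ex => /(_ erefl) [s [u [hG [e1 e2]]]].
have := hG i2 j0; rewrite -e2 !cond_ex.
have inj n m : (n%:R / 10%:R : R) = m%:R / 10%:R -> n = m.
  move=> h; apply/eqP; rewrite -(eqr_nat R); apply/eqP; apply: (mulIf _ h).
  by rewrite invr_eq0 pnatr_eq0.
by move/inj; case: (s i2) => -[|[|[|i]]] Hi.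
Qed.

End Example.

Theorem theorem3 (R : realType) (X Y : finType) (p : (X * Y)%type -> R)
  (p_pos : forall a, 0 < p a) (p_sum : \sum_(a : (X * Y)%type) p a = 1) :
  let Lam := Dfam p (@E_ce R X Y) in
  (* (i) *)
  (forall (s : {perm X}) (u : {perm Y}) (k : (X * Y)%type -> nat -> R),
     DIB p (@E_ce R X Y) Lam k ->
     (in_Gce p s u <-> comp_bij k s u = k)) /\
  (* (ii) *)
  (forall (s : {perm X}) (u : {perm Y}), in_Gce p s u ->
     forall lam : R, 0 <= lam -> (lam%:E <= Lam)%E ->
     forall k, DIB p (@E_ce R X Y) lam%:E k -> comp_bij k s u = k) /\
  (* (iii) *)
  (exists q : ('I_3 * 'I_2)%type -> R,
     (forall a, 0 < q a) /\ \sum_(a : ('I_3 * 'I_2)%type) q a = 1 /\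
     ~ (forall a a', cond_equiv q a a' <-> same_orbit_ce q a a')).
Proof.
move=> Lam; split; [|split].
- move=> s u k hk; split.
    by move=> hG; exact: (core_inv p_pos hG p_sum hk).
  by move=> hc; exact: (backward p_pos p_sum hk hc).
- by move=> s u hG lam _ _ k hk; exact: (core_inv p_pos hG p_sum hk).
- exists (@qex R); split; first exact: qex_pos.
  split; first exact: qex_sum.
  exact: ex_iii.
Qed.
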